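(* Suppose $f$ is continuously differentiable with $\nabla f$ Lipschitz continuous with constant $L_{\nabla f}$. Let $\boldsymbol{x}^0\in\mathcal{C}$, $p\le n$, $\boldsymbol{D}\in\mathbb{R}^{n\times p}$ of full column rank with QR-factorization $\boldsymbol{D}=\boldsymbol{Q}\boldsymbol{R}$, $\boldsymbol{R}=[\boldsymbol{r}_1\cdots\boldsymbol{r}_p]$, $\overline{\mathrm{diam}}(\boldsymbol{R})=\max_{1\le i\le p}\|\boldsymbol{r}_i\|$ and $\widehat{\boldsymbol{R}}=\boldsymbol{R}/\overline{\mathrm{diam}}(\boldsymbol{R})$. Then for all $\widehat{\boldsymbol{s}}\in\boldsymbol{Q}^\top(\mathcal{C}-\boldsymbol{x}^0)$ with $\|\widehat{\boldsymbol{s}}\|\le\overline{\mathrm{diam}}(\boldsymbol{R})$, $$\max_{\substack{\boldsymbol{d}\in\boldsymbol{Q}^\top(\mathcal{C}-\boldsymbol{x}^0)\\\|\boldsymbol{d}\|\le1}}\left|\left(\boldsymbol{Q}^\top\nabla f(\boldsymbol{x}^0+\boldsymbol{Q}\widehat{\boldsymbol{s}})-\nabla\widehat m(\widehat{\boldsymbol{s}})\right)^\top\boldsymbol{d}\right|\le\left(\tfrac12L_{\nabla f}\left(2+\sqrt{p}\,\|\widehat{\boldsymbol{R}}^{-1}\|_{\boldsymbol{x}^0,\mathcal{C},\boldsymbol{D}}\right)\right)\overline{\mathrm{diam}}(\boldsymbol{R})$$ and $$\left|f(\boldsymbol{x}^0+\boldsymbol{Q}\widehat{\boldsymbol{s}})-\widehat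 m(\widehat{\boldsymbol{s}})\right|\le\left(\tfrac12L_{\nabla f}\left(1+\sqrt{p}\,\|\widehat{\boldsymbol{R}}^{-1}\|_{\boldsymbol{x}^0,\mathcal{C},\boldsymbol{D}}\right)\right)\overline{\mathrm{diam}}(\boldsymbol{R})^2.$$ In particular, $\widehat m$ belongs to a class of $(\mathcal{C},\boldsymbol{Q})$-fully linear models of $f$ at $\boldsymbol{x}^0$ parametrized by $\overline{\mathrm{diam}}(\boldsymbol{R})$, with constants $\kappa_{ef}=\frac12L_{\nabla f}(1+\sqrt{p}\|\widehat{\boldsymbol{R}}^{-1}\|_{\boldsymbol{x}^0,\mathcal{C},\boldsymbol{D}})$ and $\kappa_{eg}=\frac12L_{\nabla f}(2+\sqrt{p}\|\widehat{\boldsymbol{R}}^{-1}\|_{\boldsymbol{x}^0,\mathcal{C},\boldsymbol{D}})$.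
   Context: $f:\mathbb{R}^n\to\mathbb{R}$ and $\mathcal{C}\subseteq\mathbb{R}^n$ is closed, convex, with nonempty interior. $\|\cdot\|$ is the Euclidean norm for vectors and spectral norm for matrices. QR-factorization $\boldsymbol{D}=\boldsymbol{Q}\boldsymbol{R}$: $\boldsymbol{Q}\in\mathbb{R}^{n\times p}$ with orthonormal columns, $\boldsymbol{R}\in\mathbb{R}^{p\times p}$ (invertible since $\boldsymbol{D}$ has full column rank). $\boldsymbol{Q}^\top(\mathcal{C}-\boldsymbol{x})=\{\boldsymbol{Q}^\top(\boldsymbol{z}-\boldsymbol{x}):\boldsymbol{z}\in\mathcal{C}\}$. Let $\widehat f(\widehat{\boldsymbol{s}})=f(\boldsymbol{x}^0+\boldsymbol{Q}\widehat{\boldsymbol{s}})$ and $\widehat m(\widehat{\boldsymbol{s}})=\widehat f(\boldsymbol{0}_p)+\nabla_S\widehat f(\boldsymbol{0}_p;\boldsymbol{R})^\top\widehat{\boldsymbol{s}}$, where the generalized simplex gradient is $\nabla_S\widehat f(\boldsymbol{0}_p;\boldsymbol{R})=(\boldsymbol{R}^\top)^\dagger\boldsymbol{\delta}$ with $\boldsymbol{\delta}_i=\widehat f(\boldsymbol{r}_i)-\widehat f(\boldsymbol{0}_p)$ and $\dagger$ the Moore–Penrose pseudoinverse. Geometry measure: for $\boldsymbol{M}\in\mathbb{R}^{m\times p}$, $\|\boldsymbol{M}\|_{\boldsymbol{x}^0,\mathcal{C},\boldsymbol{D}}=\frac{1}{\min\{\overline{\mathrm{diam}}(\boldsymbol{R}),1\}}\max\{\|\boldsymbol{M}\boldsymbol{w}\|:\boldsymbol{w}\in\boldsymbol{Q}^\top(\mathcal{C}-\boldsymbol{x}^0),\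 \|\boldsymbol{w}\|\le\min\{\overline{\mathrm{diam}}(\boldsymbol{R}),1\}\}$. Definition: given $\overline\Delta>0$, $\boldsymbol{x}\in\mathcal{C}$, continuously differentiable $f$ and $\boldsymbol{Q}\in\mathbb{R}^{n\times p}$ with orthonormal columns, a family $\{\widehat m_\Delta:\mathbb{R}^p\to\mathbb{R}\}_{\Delta\in(0,\overline\Delta]}$ is a class of $(\mathcal{C},\boldsymbol{Q})$-fully linear models of $f$ at $\boldsymbol{x}$ parameterized by $\Delta$ if there exist $\kappa_{ef},\kappa_{eg}>0$ such that for all $\Delta\in(0,\overline\Delta]$ and $\widehat{\boldsymbol{s}}\in\boldsymbol{Q}^\top(\mathcal{C}-\boldsymbol{x})$ with $\|\widehat{\boldsymbol{s}}\|\le\Delta$: $|f(\boldsymbol{x}+\boldsymbol{Q}\widehat{\boldsymbol{s}})-\widehat m_\Delta(\widehat{\boldsymbol{s}})|\le\kappa_{ef}\Delta^2$ and $\max_{\boldsymbol{d}\in\boldsymbol{Q}^\top(\mathcal{C}-\boldsymbol{x}),\|\boldsymbol{d}\|\le1}|(\boldsymbol{Q}^\top\nabla f(\boldsymbol{x}+\boldsymbol{Q}\widehat{\boldsymbol{s}})-\nabla\widehat m_\Delta(\widehat{\boldsymbol{s}}))^\top\boldsymbol{d}|\le\kappa_{eg}\Delta$. *)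

(* Defs.v *)
From HB Require Import structures.
From mathcomp Require Import all_boot all_order all_algebra.
From mathcomp Require Import all_classical all_reals all_analysis.
Set Implicit Arguments. Unset Strict Implicit. Unset Printing Implicit Defensive.
Import Order.TTheory GRing.Theory Num.Theory.
Import numFieldNormedType.Exports.
Local Open Scope classical_set_scope.
Local Open Scope ring_scope.

Section Defs.
Variable R : realType.

Definition dotv (n : nat) (u v : 'cV[R]_n) : R := \sum_(i < n) u i 0 * v i 0.
Definition enorm (n : nat) (v : 'cV[R]_n) : R := Num.sqrt (dotv v v).

Definition is_gradient (n : nat) (f : 'cV[R]_n -> R) (g : 'cV[R]_n -> 'cV[R]_n) :=
  forall x : 'cV[R]_n, differentiable f x /\ forall h, 'd f x h = dotv (g x) h.

Definition lipschitz_euclid (n : nat) (g : 'cV[R]_n -> 'cV[R]_n) (L : R) :=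
  forall x y, enorm (g x - g y) <= L * enorm (x - y).

Definition orthonormal_cols (n p : nat) (Q : 'M[R]_(n, p)) := Q^T *m Q = 1%:M.

Definition projset (n p : nat) (Q : 'M[R]_(n, p)) (C : set 'cV[R]_n) (x : 'cV[R]_n)
  : set 'cV[R]_p := [set Q^T *m (z - x) | z in C].

(* diam-bar(R) = max_i ||r_i|| over the columns r_i of R (0 if p = 0). *)
Definition diamR (p : nat) (Rm : 'M[R]_p) : R := \big[Num.max/0]_(i < p) enorm (col i Rm).

(* Moore--Penrose pseudoinverse: the (unique) X satisfying the four Penrose
   equations (chosen classically). *)
Definition penrose (m k : nat) (A : 'M[R]_(m, k)) (X : 'M[R]_(k, m)) : Prop :=
  [/\ A *m X *m A = A, X *m A *m X = X, (A *m X)^T = A *m X & (X *m A)^T = X *m A].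
Definition mp_pinv (m k : nat) (A : 'M[R]_(m, k)) : 'M[R]_(k, m) := xget 0 (penrose A).

Definition fhat (n p : nat) (f : 'cV[R]_n -> R) (x0 : 'cV[R]_n) (Q : 'M[R]_(n, p))
  (s : 'cV[R]_p) : R := f (x0 + Q *m s).

Definition simplex_grad (n p : nat) (f : 'cV[R]_n -> R) (x0 : 'cV[R]_n)
  (Q : 'M[R]_(n, p)) (Rm : 'M[R]_p) : 'cV[R]_p :=
  mp_pinv Rm^T *m \col_(i < p) (fhat f x0 Q (col i Rm) - fhat f x0 Q 0).

(* the linear model mhat(s) = fhat(0) + grad_S^T s ; its gradient is grad_S *)
Definition mhat (n p : nat) (f : 'cV[R]_n -> R) (x0 : 'cV[R]_n)
  (Q : 'M[R]_(n, p)) (Rm : 'M[R]_p) (s : 'cV[R]_p) : R :=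
  fhat f x0 Q 0 + dotv (simplex_grad f x0 Q Rm) s.

(* geometry measure ||M||_{x0,C,D} (the max is taken as a supremum) *)
Definition geom_measure (n p m : nat) (C : set 'cV[R]_n) (x0 : 'cV[R]_n)
  (Q : 'M[R]_(n, p)) (Rm : 'M[R]_p) (M : 'M[R]_(m, p)) : R :=
  let r := Num.min (diamR Rm) 1 in
  r^-1 * sup [set enorm (M *m w) | w in [set w | projset Q C x0 w /\ enorm w <= r]].

End Defs.

(* Main.v *)
Require Import Defs.
From HB Require Import structures.
From mathcomp Require Import all_boot all_order all_algebra.
From mathcomp Require Import all_classical all_reals all_analysis.
From mathcomp Require Import ring lra.
Import Order.TTheory GRing.Theory Num.Theory.
Import numFieldNormedType.Exports.
Local Open Scope classical_set_scope.
Local Open Scope ring_scope.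

Set Implicit Arguments. Unset Strict Implicit.


Section Lin.
Variable R : realType.
Variable n : nat.
Implicit Types u v w : 'cV[R]_n.

Lemma dotvE u v : dotv u v = (u^T *m v) 0 0.
Proof. by rewrite /dotv mxE; apply: eq_bigr => i _; rewrite mxE. Qed.

Lemma dotvC u v : dotv u v = dotv v u.
Proof. by rewrite /dotv; apply: eq_bigr => i _; rewrite mulrC. Qed.

Lemma dotvDl u v w : dotv (u + v) w = dotv u w + dotv v w.
Proof. by rewrite /dotv -big_split; apply: eq_bigr => i _; rewrite mxE mulrDl. Qed.

Lemma dotvZl a u v : dotv (a *: u) v = a * dotv u v.
Proof. by rewrite /dotv mulr_sumr; apply: eq_bigr => i _; rewrite mxE mulrA. Qed.

Lemma dotvNl u v : dotv (- u) v = - dotv u v.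
Proof. by rewrite -scaleN1r dotvZl mulN1r. Qed.

Lemma dotvBl u v w : dotv (u - v) w = dotv u w - dotv v w.
Proof. by rewrite dotvDl dotvNl. Qed.

Lemma dotvDr u v w : dotv w (u + v) = dotv w u + dotv w v.
Proof. by rewrite dotvC dotvDl !(dotvC w). Qed.

Lemma dotvZr a u v : dotv v (a *: u) = a * dotv v u.
Proof. by rewrite dotvC dotvZl dotvC. Qed.

Lemma dotvBr u v w : dotv w (u - v) = dotv w u - dotv w v.
Proof. by rewrite dotvC dotvBl !(dotvC w). Qed.

Lemma dotvNr u v : dotv v (- u) = - dotv v u.
Proof. by rewrite dotvC dotvNl dotvC. Qed.

Lemma dotv_ge0 u : 0 <= dotv u u.
Proof. by apply: sumr_ge0 => i _; rewrite -expr2 sqr_ge0. Qed.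

Lemma dotv_eq0 u : dotv u u = 0 -> u = 0.
Proof.
move=> /eqP; rewrite psumr_eq0 => [/allP H|i _]; last by rewrite -expr2 sqr_ge0.
apply/matrixP => i j; rewrite (ord1 j) mxE.
have := H i (mem_index_enum _); rewrite -expr2 => /implyP /(_ isT).
by rewrite sqrf_eq0 => /eqP.
Qed.

Lemma enorm_ge0 u : 0 <= enorm u.
Proof. exact: sqrtr_ge0. Qed.

Lemma enorm_sq u : enorm u ^+ 2 = dotv u u.
Proof. by rewrite sqr_sqrtr // dotv_ge0. Qed.

Lemma enorm_eq0 u : enorm u = 0 -> u = 0.
Proof. by move=> H; apply: dotv_eq0; rewrite -enorm_sq H expr0n. Qed.

Lemma enormZ a u : enorm (a *: u) = `|a| * enorm u.
Proof. by rewrite /enorm dotvZl dotvZr mulrA -expr2 sqrtrM ?sqr_ge0 // sqrtr_sqr. Qed.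

Lemma enormN u : enorm (- u) = enorm u.
Proof. by rewrite -scaleN1r enormZ normrN normr1 mul1r. Qed.

Lemma CS u v : `|dotv u v| <= enorm u * enorm v.
Proof.
set a := enorm u; set b := enorm v; set d := dotv u v.
have a0 : 0 <= a := enorm_ge0 u. have b0 : 0 <= b := enorm_ge0 v.
have Hp : 0 <= dotv (b *: u - a *: v) (b *: u - a *: v) := dotv_ge0 _.
have Hm : 0 <= dotv (b *: u + a *: v) (b *: u + a *: v) := dotv_ge0 _.
rewrite !(dotvDl, dotvBl, dotvDr, dotvBr, dotvNl, dotvNr, dotvZl, dotvZr) in Hp Hm.
rewrite -!enorm_sq -/a -/b (dotvC v u) -/d in Hp Hm.
have [ab0|abp] := eqVneq (a * b) 0.
  move/eqP: ab0; rewrite mulf_eq0 => /orP[/eqP/enorm_eq0 u0|/eqP/enorm_eq0 v0].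
    by rewrite /d /dotv big1 ?normr0 ?mulr_ge0 // => i _; rewrite u0 mxE mul0r.
  by rewrite /d /dotv big1 ?normr0 ?mulr_ge0 // => i _; rewrite v0 mxE mulr0.
have abp' : 0 < a * b by rewrite lt_def abp mulr_ge0.
rewrite ler_norml; apply/andP; split; nra.
Qed.

End Lin.


Section Taylor.
Variable R : realType.
Variable n : nat.

Lemma phi_derive (f : 'cV[R]_n -> R) g x h (t : R) : is_gradient f g ->
  is_derive t 1 (fun t => f (x + t *: h)) (dotv (g (x + t *: h)) h).
Proof.
move=> Hg; have [df dg] := Hg (x + t *: h).
have E : (fun k : R => k^-1 *: (((fun t => f (x + t *: h)) \o shift t) (k *: 1) - f (x + t *: h)))
  = (fun k : R => k^-1 *: ((f \o shift (x + t *: h)) (k *: h) - f (x + t *: h))).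
  apply: funext => k /=; rewrite /shift; congr (_ *: (f _ - _)).
  rewrite (_ : k%:A = k); last exact: mulr1.
  by rewrite scalerDl addrCA addrC.
split; first by rewrite /derivable E; exact: diff_derivable.
by rewrite /derive E -/(derive f (x + t *: h) h) deriveE // dg.
Qed.

Lemma taylor (f : 'cV[R]_n -> R) g L x h : is_gradient f g -> lipschitz_euclid g L ->
  `|f (x + h) - f x - dotv (g x) h| <= 2^-1 * L * enorm h ^+ 2.
Proof.
move=> Hg HL.
suff key: forall e : R, (e = 1 \/ e = -1) ->
    e * (f (x + h) - f x - dotv (g x) h) <= 2^-1 * L * enorm h ^+ 2.
  rewrite ler_norml; apply/andP; split;
    [have := key (-1) (or_intror erefl)| have := key 1 (or_introl erefl)]; lra.
move=> e He.
set c := dotv (g x) h; set K := 2^-1 * L * enorm h ^+ 2.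
pose phi := fun t : R => f (x + t *: h).
pose psi := e \*: (phi - id * cst c) - (id ^+ 2) * cst K.
have Dpsi : forall t : R, is_derive t (1:R) psi
   (e * (dotv (g (x + t *: h)) h - c) - (2 * t) * K).
  move=> t; have Dphi := phi_derive x h t Hg.
  rewrite /psi; apply: is_derive_eq.
  rewrite !scaler0 !add0r /cst /= ; rewrite /GRing.scale /= !mulr1 expr1; ring.
have dpsi : forall t : R, derivable psi t 1 by move=> t; exact: (@ex_derive _ _ _ _ _ _ _ (Dpsi t)).
have H := @ler0_derive1_le_cc R psi 0 1 (fun t _ => dpsi t).
have /H {}H : forall t, t \in `]0, 1[%R -> derive1 psi t <= 0.
  move=> t; rewrite in_itv /= => /andP[t0 t1].
  rewrite derive1E derive_val.
  have E1 : e * (dotv (g (x + t *: h)) h - c) <= `|dotv (g (x + t *: h) - g x) h|.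
    rewrite dotvBl -/c; case: He => ->; rewrite ?mul1r ?mulN1r; [exact: ler_norm | rewrite -normrN; exact: ler_norm].
  have E2 := CS (g (x + t *: h) - g x) h.
  have E3 := HL (x + t *: h) x.
  rewrite [x + t *: h - x]addrC addKr enormZ (ger0_norm (ltW t0)) in E3.
  have hn := enorm_ge0 h.
  have E4 : enorm (g (x + t *: h) - g x) * enorm h <= L * (t * enorm h) * enorm h.
    by rewrite ler_wpM2r.
  rewrite /K. nra.
have /H {}H : {within `[0, 1], continuous psi}.
  by apply: derivable_within_continuous => t _; exact: dpsi.
have := H 1 0; rewrite !in_itv /= !lexx ler01 => /(_ isT isT isT).
have P t : psi t = e * (f (x + t *: h) - t * c) - t ^+ 2 * K by [].
rewrite !P scale0r scale1r addr0 !mul0r expr1n mul1r expr0n mul0r !subr0; lra.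
Qed.

End Taylor.


Section Mx.
Variable R : realType.

Lemma dotv_trl n p (Q : 'M[R]_(n, p)) a b : dotv (Q^T *m a) b = dotv a (Q *m b).
Proof. by rewrite !dotvE trmx_mul trmxK mulmxA. Qed.

Lemma dotv_orth n p (Q : 'M[R]_(n, p)) u v : orthonormal_cols Q ->
  dotv (Q *m u) (Q *m v) = dotv u v.
Proof. by move=> HQ; rewrite -dotv_trl mulmxA HQ mul1mx. Qed.

Lemma enorm_orth n p (Q : 'M[R]_(n, p)) u : orthonormal_cols Q ->
  enorm (Q *m u) = enorm u.
Proof. by move=> HQ; rewrite /enorm dotv_orth. Qed.

Lemma enorm_trQ n p (Q : 'M[R]_(n, p)) v : orthonormal_cols Q ->
  enorm (Q^T *m v) <= enorm v.
Proof.
move=> HQ.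
have a0 := enorm_ge0 (Q^T *m v).
have : enorm (Q^T *m v) ^+ 2 <= enorm v * enorm (Q^T *m v).
  rewrite enorm_sq dotv_trl dotvC -[X in _ <= _ * X](enorm_orth _ HQ).
  by rewrite mulrC; apply: le_trans (ler_norm _) (CS _ _).
have := enorm_ge0 v; nra.
Qed.

Lemma coord_le n (v : 'cV[R]_n) i : `|v i 0| <= enorm v.
Proof.
rewrite -(sqrtr_sqr (v i 0)) /enorm ler_sqrt ?dotv_ge0 //.
rewrite /dotv (bigD1 i) //= -expr2 lerDl.
by apply: sumr_ge0 => j _; rewrite -expr2 sqr_ge0.
Qed.

Lemma enorm_le_coord n (v : 'cV[R]_n) B : 0 <= B -> (forall i, `|v i 0| <= B) ->
  enorm v <= Num.sqrt n%:R * B.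
Proof.
move=> B0 H; rewrite -(ger0_norm B0) -sqrtr_sqr -sqrtrM ?ler0n // /enorm ler_sqrt;
  last by rewrite mulr_ge0 ?ler0n ?sqr_ge0.
apply: le_trans (_ : \sum_(i < n) B ^+ 2 <= _); last by rewrite sumr_const card_ord mulr_natl.
rewrite /dotv ler_sum // => i _.
rewrite -expr2 -real_normK ?num_real //; have := H i; have := normr_ge0 (v i 0); nra.
Qed.

Lemma enorm_mx_bound m p (M : 'M[R]_(m, p)) w :
  enorm (M *m w) <= Num.sqrt m%:R * ((\sum_i \sum_j `|M i j|) * enorm w).
Proof.
apply: enorm_le_coord; first by rewrite mulr_ge0 ?enorm_ge0 ?sumr_ge0 // => i _; rewrite sumr_ge0.
move=> i; rewrite mxE; apply: le_trans (ler_norm_sum _ _ _) _.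
apply: le_trans (_ : \sum_j `|M i j| * enorm w <= _).
  by apply: ler_sum => j _; rewrite normrM ler_wpM2l ?coord_le.
rewrite -mulr_suml ler_wpM2r ?enorm_ge0 // (bigD1 i) //= lerDl.
by apply: sumr_ge0 => k _; rewrite sumr_ge0.
Qed.

End Mx.


Section Geo.
Variable R : realType.

Lemma projset_scale n p (Q : 'M[R]_(n, p)) C x0 w (t : R) :
  convex_set C -> C x0 -> projset Q C x0 w -> 0 <= t -> t <= 1 ->
  projset Q C x0 (t *: w).
Proof.
move=> cvx Cx0 [z Cz <-] t0 t1.
pose lam : {i01 R} := Itv01 t0 t1.
have := cvx z x0 lam (mem_set Cz) (mem_set Cx0) => /set_mem H.
exists (t *: z + (1 - t) *: x0); first exact: H.
by rewrite scalerBl scale1r scalemxAr; congr (_ *m _); rewrite scalerBr addrCA addrAC subrr add0r.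
Qed.

Lemma geom_bound n p m C x0 (Q : 'M[R]_(n, p)) Rm (M : 'M[R]_(m, p)) w rho :
  convex_set C -> C x0 -> 0 < Num.min (diamR Rm) 1 ->
  projset Q C x0 w -> enorm w <= rho -> Num.min (diamR Rm) 1 <= rho ->
  enorm (M *m w) <= rho * geom_measure C x0 Q Rm M.
Proof.
move=> cvx Cx0; rewrite /geom_measure /=; set r := Num.min _ _ => r0 Pw wrho rrho.
set S := [set _ | _ in _].
have rho0 : 0 < rho by apply: lt_le_trans rrho.
have t0 : 0 <= r / rho by rewrite divr_ge0 ?ltW.
have t1 : r / rho <= 1 by rewrite ler_pdivrMr // mul1r.
have Pw' := projset_scale cvx Cx0 Pw t0 t1.
have nw' : enorm ((r / rho) *: w) <= r.
  rewrite enormZ ger0_norm //.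
  by apply: le_trans (ler_wpM2l t0 wrho) _; rewrite divfK ?gt_eqF.
have ub : has_ubound S.
  exists (Num.sqrt m%:R * ((\sum_i \sum_j `|M i j|) * r)) => _ [v [_ nv] <-].
  apply: le_trans (enorm_mx_bound _ _) _.
  rewrite ler_wpM2l ?sqrtr_ge0 // ler_wpM2l //.
  by apply: sumr_ge0 => i _; rewrite sumr_ge0.
have := ub_le_sup ub (ex_intro2 _ _ _ (conj Pw' nw') erefl).
rewrite -scalemxAr enormZ ger0_norm // => H.
rewrite mulrA -ler_pdivrMl ?divr_gt0 // invf_div.
exact: H.
Qed.

End Geo.

Unset Implicit Arguments. Set Strict Implicit.

Theorem mainTheorem5 (R : realType) (n p : nat)
  (f : 'cV[R]_n -> R) (gradf : 'cV[R]_n -> 'cV[R]_n) (Lg : R)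
  (C : set 'cV[R]_n) (x0 : 'cV[R]_n)
  (D Q : 'M[R]_(n, p)) (Rm : 'M[R]_p) :
  is_gradient f gradf ->
  lipschitz_euclid gradf Lg ->
  closed C -> convex_set C -> interior C !=set0 ->
  C x0 ->
  (p <= n)%N ->
  \rank D = p ->
  orthonormal_cols Q -> D = Q *m Rm ->
  let Rhat := (diamR Rm)^-1 *: Rm in
  let Gm := geom_measure C x0 Q Rm (invmx Rhat) in
  forall s : 'cV[R]_p, projset Q C x0 s -> enorm s <= diamR Rm ->
    (forall d : 'cV[R]_p, projset Q C x0 d -> enorm d <= 1 ->
       `| dotv (Q^T *m gradf (x0 + Q *m s) - simplex_grad f x0 Q Rm) d |
         <= (2^-1 * Lg * (2 + Num.sqrt p%:R * Gm)) * diamR Rm)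
    /\
    `| f (x0 + Q *m s) - mhat f x0 Q Rm s |
         <= (2^-1 * Lg * (1 + Num.sqrt p%:R * Gm)) * diamR Rm ^+ 2.
Proof.
move=> Hg HL _ Ccvx _ Cx0 pn rkD HQ DQR Rhat Gm s Ps ns.
have [p0|pp] := posnP p.
  subst p; split.
    by move=> d _ _; rewrite /dotv big_ord0 normr0 /diamR big_ord0 mulr0.
  rewrite [s]flatmx0 /mhat /fhat /dotv big_ord0 addr0 subrr normr0.
  by rewrite /diamR big_ord0 expr0n mulr0.
set Dl := diamR Rm.
have np : (0 < n)%N by apply: leq_trans pn.
have L0 : 0 <= Lg.
  pose x : 'cV[R]_n := const_mx 1.
  have := HL x 0; rewrite subr0.
  have xn : 0 < enorm x.
    rewrite lt_def enorm_ge0 andbT; apply/eqP => /enorm_eq0 /matrixP /(_ (Ordinal np) 0).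
    by rewrite !mxE => /eqP; rewrite oner_eq0.
  have := enorm_ge0 (gradf x - gradf 0); nra.
have Runit : Rm \in unitmx.
  rewrite -row_free_unit /row_free; apply/eqP/anti_leq.
  rewrite rank_leq_col /= -{1}rkD DQR; exact: mxrankM_maxr.
have RTunit : Rm^T \in unitmx by rewrite unitmx_tr.
have Ppinv : mp_pinv Rm^T = invmx Rm^T.
  have : penrose Rm^T (mp_pinv Rm^T).
    rewrite /mp_pinv; apply: (@xgetI _ 0 _ (invmx Rm^T)) => /=.
    by split; rewrite ?mulmxV ?mulVmx ?mul1mx ?trmx1.
  case=> H1 _ _ _.
  have := congr1 (fun M => invmx Rm^T *m M *m invmx Rm^T) H1.
  by rewrite /= !mulmxA mulVmx // mul1mx -mulmxA mulmxV // mulmx1 mul1mx.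
have colD i : enorm (col i Rm) <= Dl by rewrite /Dl /diamR; exact: le_bigmax.
have D0 : 0 < Dl.
  rewrite lt_def; apply/andP; split; last by rewrite /Dl /diamR bigmax_ge_id.
  apply/eqP => Dl0; move: rkD; rewrite DQR.
  suff -> : Rm = 0 by rewrite mulmx0 mxrank0 => p0; move: pp; rewrite -p0.
  apply/matrixP => i j; have := colD j; rewrite Dl0 => cj.
  have /enorm_eq0 /matrixP /(_ i 0) : enorm (col j Rm) = 0.
    by apply/le_anti; rewrite cj enorm_ge0.
  by rewrite !mxE.
set gh := Q^T *m gradf x0.
set dl := \col_(i < p) (fhat f x0 Q (col i Rm) - fhat f x0 Q 0).
set E := dl - Rm^T *m gh.
have gSE : simplex_grad f x0 Q Rm - gh = invmx Rm^T *m E.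
  by rewrite /simplex_grad Ppinv /E mulmxBr mulmxA mulVmx // mul1mx.
set B := 2^-1 * Lg * Dl ^+ 2.
have B0 : 0 <= B by apply: mulr_ge0; [apply: mulr_ge0 => //; rewrite invr_ge0 ler0n | exact: sqr_ge0].
have Ei i : `|E i 0| <= B.
  have -> : E i 0 = f (x0 + Q *m col i Rm) - f x0 - dotv (gradf x0) (Q *m col i Rm).
    rewrite /E /dl !mxE /fhat mulmx0 addr0 -dotv_trl -/gh dotvC /dotv.
    congr (_ - _); apply: eq_bigr => k _; rewrite !mxE mulrC //.
  apply: le_trans (taylor _ _ Hg HL) _.
  rewrite /B (enorm_orth _ HQ) ler_wpM2l ?mulr_ge0 ?invr_ge0 ?ler0n //.
  have := colD i; have := enorm_ge0 (col i Rm); nra.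
have nE : enorm E <= Num.sqrt p%:R * B by exact: (enorm_le_coord B0 Ei).
have key w : dotv (simplex_grad f x0 Q Rm - gh) w = dotv E (invmx Rm *m w).
  by rewrite gSE -trmx_inv dotv_trl.
have Rhu : invmx Rhat = Dl *: invmx Rm.
  rewrite /Rhat invmxZ ?invrK // unitmxZ // unitfE invr_eq0 gt_eqF //.
have invRn w : enorm (invmx Rm *m w) = Dl^-1 * enorm (invmx Rhat *m w).
  by rewrite Rhu -scalemxAl enormZ gtr0_norm // mulKf ?gt_eqF.
have r0 : 0 < Num.min Dl 1 by rewrite lt_min D0 ltr01.
have geo w rho : projset Q C x0 w -> enorm w <= rho -> Num.min Dl 1 <= rho ->
    enorm (invmx Rhat *m w) <= rho * Gm.
  by move=> Pw wr rr; apply: geom_bound.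
have sD : 0 <= Num.sqrt p%:R := sqrtr_ge0 _.
split.
  move=> d Pd nd.
  have -> : Q^T *m gradf (x0 + Q *m s) - simplex_grad f x0 Q Rm =
      Q^T *m (gradf (x0 + Q *m s) - gradf x0) - (simplex_grad f x0 Q Rm - gh).
    by rewrite mulmxBr -/gh opprB addrA subrK.
  rewrite dotvBl key.
  have T1 : `|dotv (Q^T *m (gradf (x0 + Q *m s) - gradf x0)) d| <= Lg * Dl.
    apply: le_trans (CS _ _) _.
    have h1 := enorm_trQ (gradf (x0 + Q *m s) - gradf x0) HQ.
    have h2 := HL (x0 + Q *m s) x0.
    rewrite addrAC subrr add0r (enorm_orth _ HQ) in h2.
    apply: le_trans (_ : enorm (Q^T *m (gradf (x0 + Q *m s) - gradf x0)) <= _).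
      by rewrite ler_piMr // enorm_ge0.
    exact: le_trans h1 (le_trans h2 (ler_wpM2l L0 ns)).
  have T2 : `|dotv E (invmx Rm *m d)| <= Num.sqrt p%:R * B * (Dl^-1 * (1 * Gm)).
    apply: le_trans (CS _ _) _.
    apply: ler_pM => //; first exact: enorm_ge0.
      exact: enorm_ge0.
    rewrite invRn; apply: ler_wpM2l; first by rewrite invr_ge0 ltW.
    apply: le_trans (geo d 1 Pd nd _) _; [by rewrite ge_min lexx orbT | by rewrite mul1r].
  have eq : Num.sqrt p%:R * B * (Dl^-1 * (1 * Gm)) = 2^-1 * Lg * (Num.sqrt p%:R * Gm) * Dl.
    by rewrite /B; field; rewrite gt_eqF.
  apply: le_trans (ler_normB _ _) _.
  rewrite eq in T2; lra.
have -> : f (x0 + Q *m s) - mhat f x0 Q Rm s =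
    (f (x0 + Q *m s) - f x0 - dotv (gradf x0) (Q *m s)) - dotv (simplex_grad f x0 Q Rm - gh) s.
  rewrite /mhat /fhat mulmx0 addr0 dotvBl -dotv_trl -/gh; ring.
rewrite key.
have T1 : `|f (x0 + Q *m s) - f x0 - dotv (gradf x0) (Q *m s)| <= B.
  apply: le_trans (taylor _ _ Hg HL) _.
  rewrite /B (enorm_orth _ HQ) ler_wpM2l ?mulr_ge0 ?invr_ge0 ?ler0n //.
  have := enorm_ge0 s; move: ns; rewrite -/Dl; nra.
have T2 : `|dotv E (invmx Rm *m s)| <= Num.sqrt p%:R * B * (Dl^-1 * (Dl * Gm)).
  apply: le_trans (CS _ _) _.
  apply: ler_pM => //; first exact: enorm_ge0.
    exact: enorm_ge0.
  rewrite invRn; apply: ler_wpM2l; first by rewrite invr_ge0 ltW.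
  by apply: geo => //; rewrite ge_min lexx.
have eq : Num.sqrt p%:R * B * (Dl^-1 * (Dl * Gm)) = Num.sqrt p%:R * B * Gm.
  by rewrite mulKf ?gt_eqF.
have eq2 : 2^-1 * Lg * (1 + Num.sqrt p%:R * Gm) * Dl ^+ 2 = B + Num.sqrt p%:R * B * Gm.
  by rewrite /B; ring.
apply: le_trans (ler_normB _ _) _.
rewrite eq in T2; rewrite eq2; lra.
Qed.
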